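(* For every $d$ with $0\le d\le\rho(m)-1$ and every integer $t$ with $0\le t\le L_1(d)+h-1-\rho(m)$, we have $z(t,d)=y(t)$.
   Context: For $u\in\mathbb{R}$ let $\mathbf 1[u]=1$ if $u\ge 0$ and $\mathbf 1[u]=0$ if $u<0$. Let $m$ be a positive integer and let $\rho(m)$ denote the number of primes $p$ with $2m<p<3m$; assume $\rho(m)\ge 2$. List these primes as $p_0>p_1>\dots>p_{\rho(m)-1}$ and put $\alpha_i=3m-p_i$. Let $k=(6m-1)\rho(m)$, $\mu_i=\lfloor k/p_i\rfloor$, $\beta_i=k-p_i\mu_i$. Define weights $\bar a_j$, $1\le j\le k$: if $\rho(m)$ is even, $\bar a_j=2$ if $j=\ell p_i$ for some $i$ and some $\ell$ with $1\le \ell\le 3\rho(m)/2$, $\bar a_j=-2$ if $j=\ell p_i$ with $3\rho(m)/2<\ell\le 2\rho(m)$, and $\bar a_j=0$ otherwise; if $\rho(m)$ is odd, $\bar a_j=2$ if $j=\ell p_i$ with $1\le\ell\le (3\rho(m)-1)/2$, $\bar a_j=-2$ if $j=\ell p_i$ with $(3\rho(m)+1)/2\le \ell\le 2\rho(m)-2$, $\bar a_j=-1$ if $j=\ell p_i$ with $\ell\in\{2\rho(m)-1,2\rho(m)\}$, and $\bar a_j=0$ otherwise (well defined since the sets $\{\ell p_i:1\le\ell\le2\rho(m)\}$ are pairwise disjoint). Let $\bar\theta=2\rho(m)$. For each $i$ define $x^{\alpha_i}(t)$ for $0\le t\le k-1$ by $x^{\alpha_i}(t)=1$ if $t=\beta_i+\ell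 p_i$ for some $0\le \ell\le\mu_i-1$ and $x^{\alpha_i}(t)=0$ otherwise, and for $t\ge k$ by $x^{\alpha_i}(t)=\mathbf 1\big[\sum_{j=1}^k \bar a_j x^{\alpha_i}(t-j)-\bar\theta\big]$. Let $h=\rho(m)k$. For $1\le f\le h$ let $b_f=\bar a_j$ if $f=\rho(m)j$ with $1\le j\le k$, and $b_f=0$ otherwise. Define $(y(n))_{n\ge0}$ by $y(\rho(m)j+i)=x^{\alpha_i}(1+j)$ for $0\le j\le k-1$, $0\le i\le\rho(m)-1$, and $y(n)=\mathbf 1\big[\sum_{f=1}^h b_f y(n-f)-\bar\theta\big]$ for $n\ge h$. Let $L_1(d)=\rho(m)\cdot\mathrm{lcm}(p_0,\dots,p_d)$ for $0\le d\le\rho(m)-1$. For $0\le d\le\rho(m)-1$ let $B_0(d)=\{f\in\mathbb Z:\ 1\le f\le h-d,\ y(h+L_1(d)-\rho(m)-f)=1\}$, $B_{\ell+1}(d)=\{1+f: f\in B_\ell(d)\}$ for $\ell\ge0$, $A(d)=\bigcup_{\ell=0}^{d}B_\ell(d)$, and $Tot(d)=|B_0(d)|$. Fix a real number $\lambda$ with $-1\le\lambda<0$. Put $\beta(d)=\lambda/Tot(d)$, $\xi(d)=\lambda-\beta(d)/8$, $\theta_2(d)=\bar\theta+\xi(d)$, and for $1\le f\le h$ let $c(f,d)=b_f+\beta(d)$ if $f\in A(d)$ and $c(f,d)=b_f$ otherwise. Define $(z(n,d))_{n\ge0}$ by $z(n,d)=y(n)$ for $0\le n\le h-1$ and $z(n,d)=\mathbf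 1\big[\sum_{f=1}^h c(f,d)\,z(n-f,d)-\theta_2(d)\big]$ for $n\ge h$. *)

(* Defs.v *)
From Stdlib Require Import Reals Lra Lia ZArith Arith Bool List Znumtheory.
Import ListNotations.
Open Scope R_scope.

Definition ind (u : R) : nat := if Rle_dec 0 u then 1%nat else 0%nat.

Definition sum1 (K : nat) (g : nat -> R) : R :=
  fold_right Rplus 0 (map g (seq 1 K)).

(** Generic threshold recurrence of order K:
    s(n) = init n for n < K,
    s(n) = 1[ sum_{f=1}^K w f * s(n-f) - th ] for n >= K.
    [tr_list ... n] is the list [s(0); ...; s(n-1)]. *)
Fixpoint tr_list (K : nat) (init : nat -> nat) (w : nat -> R) (th : R) (n : nat)
  : list nat :=
  match n with
  | O => []
  | S n' =>
      let l := tr_list K init w th n' in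
      l ++ [if (n' <? K)%nat then init n'
            else ind (sum1 K (fun f => w f * INR (nth (n' - f) l 0%nat)) - th)]
  end.

Definition tr (K : nat) (init : nat -> nat) (w : nat -> R) (th : R) (n : nat) : nat :=
  nth n (tr_list K init w th (S n)) 0%nat.

(** Primes p with 2m < p < 3m, listed in decreasing order p_0 > p_1 > ... *)
Definition primeb (p : nat) : bool :=
  if prime_dec (Z.of_nat p) then true else false.

Definition prime_list (m : nat) : list nat :=
  filter primeb (rev (seq (2 * m + 1) (m - 1))).

Definition rho (m : nat) : nat := length (prime_list m).

Definition pr (m i : nat) : nat := nth i (prime_list m) 0%nat.

Definition kk (m : nat) : nat := ((6 * m - 1) * rho m)%nat.
Definition mu (m i : nat) : nat := (kk m / pr m i)%nat.
Definition beta_ (m i : nat) : nat := (kk m - pr m i * mu m i)%nat.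

(** If j = l * p_i for some i < rho(m) and 1 <= l <= 2 rho(m), returns Some l
    (the first such i is used; the sets {l p_i} are pairwise disjoint). *)
Definition ell_of (m j : nat) : option nat :=
  let R := rho m in
  match find (fun i => ((j mod pr m i =? 0) && (1 <=? j / pr m i)
                        && (j / pr m i <=? 2 * R))%nat) (seq 0 R) with
  | Some i => Some (j / pr m i)%nat
  | None => None
  end.

Definition abar (m j : nat) : R :=
  let R := rho m in
  match ell_of m j with
  | None => 0
  | Some l =>
      if Nat.even R then
        (if (l <=? 3 * R / 2)%nat then 2 else -2)
      else
        (if (l <=? (3 * R - 1) / 2)%nat then 2
         else if (l <=? 2 * R - 2)%nat then -2
         else -1)
  end.

Definition thetabar (m : nat) : R := INR (2 * rho m).

Definition x_init (m i t : nat) : nat :=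
  if existsb (fun l => (t =? beta_ m i + l * pr m i)%nat) (seq 0 (mu m i))
  then 1%nat else 0%nat.

Definition xa (m i t : nat) : nat :=
  tr (kk m) (x_init m i) (abar m) (thetabar m) t.

Definition hh (m : nat) : nat := (rho m * kk m)%nat.

Definition bw (m f : nat) : R :=
  if ((f mod rho m =? 0) && (1 <=? f / rho m) && (f / rho m <=? kk m))%nat
  then abar m (f / rho m) else 0.

Definition y_init (m n : nat) : nat := xa m (n mod rho m) (1 + n / rho m).

Definition y (m n : nat) : nat := tr (hh m) (y_init m) (bw m) (thetabar m) n.

Definition L1 (m d : nat) : nat :=
  (rho m * fold_left Nat.lcm (map (pr m) (seq 0 (S d))) 1)%nat.

Definition inB0 (m d f : nat) : bool :=
  ((1 <=? f) && (f <=? hh m - d)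
   && (y m (hh m + L1 m d - rho m - f) =? 1))%nat.

Definition inA (m d f : nat) : bool :=
  existsb (fun l => ((l <? f) && inB0 m d (f - l))%nat) (seq 0 (S d)).

Definition Tot (m d : nat) : nat :=
  length (filter (inB0 m d) (seq 1 (hh m - d))).

Definition betad (lam : R) (m d : nat) : R := lam / INR (Tot m d).
Definition xi (lam : R) (m d : nat) : R := lam - betad lam m d / 8.
Definition theta2 (lam : R) (m d : nat) : R := thetabar m + xi lam m d.

Definition cw (lam : R) (m d f : nat) : R :=
  if inA m d f then bw m f + betad lam m d else bw m f.

Definition z (lam : R) (m n d : nat) : nat :=
  tr (hh m) (y m) (cw lam m d) (theta2 lam m d) n.

(* Main.v *)
From Stdlib Require Import Reals Lra Lia ZArith Arith Bool List Znumtheory Classical.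
Require Import Defs.
Import ListNotations.

Module MA.
Local Open Scope R_scope.

Definition sumL (l : list nat) (g : nat -> R) : R := fold_right Rplus 0 (map g l).

Lemma sum1_sumL K g : sum1 K g = sumL (seq 1 K) g.
Proof. reflexivity. Qed.

Lemma sumL_ext_in l g1 g2 : (forall x, In x l -> g1 x = g2 x) -> sumL l g1 = sumL l g2.
Proof.
  induction l; simpl; intros H; auto.
  unfold sumL in *; simpl. rewrite H by auto. rewrite IHl; auto.
Qed.

Lemma sumL_app l1 l2 g : sumL (l1 ++ l2) g = sumL l1 g + sumL l2 g.
Proof. unfold sumL; induction l1; simpl; [lra|]. rewrite IHl1; lra. Qed.

Lemma sumL_plus l g1 g2 : sumL l (fun x => g1 x + g2 x) = sumL l g1 + sumL l g2.
Proof. unfold sumL; induction l; simpl; [lra|]. rewrite IHl; lra. Qed.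

Lemma sumL_scal l g c : sumL l (fun x => g x * c) = sumL l g * c.
Proof. unfold sumL; induction l; simpl; [lra|]. rewrite IHl; lra. Qed.

Lemma sumL_scal_l l g c : sumL l (fun x => c * g x) = c * sumL l g.
Proof. unfold sumL; induction l; simpl; [lra|]. rewrite IHl; lra. Qed.

Lemma sumL_zero l : sumL l (fun _ => 0) = 0.
Proof. unfold sumL; induction l; simpl; [lra|]. rewrite IHl; lra. Qed.

Lemma sumL_le l g1 g2 : (forall x, In x l -> g1 x <= g2 x) -> sumL l g1 <= sumL l g2.
Proof.
  unfold sumL; induction l; simpl; intros H; [lra|].
  specialize (IHl (fun x Hx => H x (or_intror Hx))). specialize (H a (or_introl eq_refl)). lra.
Qed.

Lemma sumL_swap l1 l2 (F : nat -> nat -> R) :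
  sumL l1 (fun a => sumL l2 (fun b => F a b)) = sumL l2 (fun b => sumL l1 (fun a => F a b)).
Proof.
  induction l1; simpl.
  - unfold sumL at 1; simpl. symmetry. apply sumL_zero.
  - unfold sumL at 1; simpl. fold (sumL l1 (fun a => sumL l2 (fun b => F a b))).
    rewrite IHl1. rewrite <- sumL_plus. apply sumL_ext_in. intros; unfold sumL; simpl; lra.
Qed.

Lemma sumL_const l c : sumL l (fun _ => c) = INR (length l) * c.
Proof. unfold sumL; induction l; simpl fold_right; simpl length; [simpl; lra|]. rewrite IHl, S_INR; lra. Qed.

Lemma sumL_indic l (a : nat) (c : nat -> R) : NoDup l ->
  sumL l (fun x => if (x =? a)%nat then c x else 0) = if existsb (Nat.eqb a) l then c a else 0.
Proof.
  induction l as [|b l IH]; intros Hnd; simpl; [unfold sumL; simpl; lra|].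
  inversion Hnd; subst. unfold sumL; simpl. fold (sumL l (fun x => if (x =? a)%nat then c x else 0)).
  rewrite IH by auto.
  destruct (Nat.eqb_spec b a) as [->|Hne].
  - rewrite Nat.eqb_refl. simpl. destruct (existsb (Nat.eqb a) l) eqn:E; [|lra].
    apply existsb_exists in E. destruct E as [x [Hx Hx']]. apply Nat.eqb_eq in Hx'; subst. contradiction.
  - replace (a =? b)%nat with false by (symmetry; apply Nat.eqb_neq; lia). simpl. lra.
Qed.

Lemma sumL_find l (P : nat -> bool) (F : nat -> R) : NoDup l ->
  (forall a b, In a l -> In b l -> P a = true -> P b = true -> a = b) ->
  sumL l (fun x => if P x then F x else 0) = match find P l with Some x => F x | None => 0 end.
Proof.
  induction l as [|b l IH]; intros Hnd Hu; simpl; [unfold sumL; simpl; lra|].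
  inversion Hnd; subst. unfold sumL; simpl. fold (sumL l (fun x => if P x then F x else 0)).
  destruct (P b) eqn:Pb.
  - rewrite (sumL_ext_in l _ (fun _ => 0)). rewrite sumL_zero; lra.
    intros x Hx. destruct (P x) eqn:Px; auto. assert (x = b) by (apply Hu; simpl; auto). subst; contradiction.
  - rewrite IH; auto. lra. intros; apply Hu; simpl; auto.
Qed.

Definition cnt (P : nat -> bool) (l : list nat) : nat := length (filter P l).

Lemma cnt_app (P : nat -> bool) (l1 l2 : list nat) : cnt P (l1 ++ l2) = (cnt P l1 + cnt P l2)%nat.
Proof. unfold cnt; rewrite filter_app, length_app; auto. Qed.

Lemma sumL_cnt (l : list nat) (P : nat -> bool) : sumL l (fun x => if P x then 1 else 0) = INR (cnt P l).
Proof.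
  unfold sumL, cnt; induction l; simpl; [lra|]. destruct (P a); simpl length; rewrite IHl; try rewrite S_INR; lra.
Qed.

Lemma cnt_ext_in (P Q : nat -> bool) (l : list nat) : (forall x, In x l -> P x = Q x) -> cnt P l = cnt Q l.
Proof. unfold cnt; induction l; simpl; intros H; auto. rewrite H by auto. destruct (Q a); simpl; rewrite IHl; auto. Qed.

Lemma cnt_le (P Q : nat -> bool) (l : list nat) : (forall x, In x l -> P x = true -> Q x = true) -> (cnt P l <= cnt Q l)%nat.
Proof. unfold cnt; induction l; simpl; intros H; auto. 
  specialize (IHl (fun x Hx => H x (or_intror Hx))).
  destruct (P a) eqn:Pa. rewrite (H a (or_introl eq_refl) Pa). simpl; lia. destruct (Q a); simpl; lia. Qed.

Lemma cnt_le1 (P : nat -> bool) (l : list nat) : NoDup l -> (forall a b, In a l -> In b l -> P a = true -> P b = true -> a = b) -> (cnt P l <= 1)%nat.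
Proof.
  unfold cnt; induction l as [|b l IH]; intros Hnd Hu; simpl; auto.
  inversion Hnd; subst. destruct (P b) eqn:Pb.
  - simpl. assert (filter P l = []). { destruct (filter P l) eqn:E; auto. exfalso.
      assert (In n (filter P (l))) by (rewrite E; simpl; auto). apply filter_In in H. destruct H.
      assert (n = b) by (apply Hu; simpl; auto). subst; contradiction. }
    rewrite H; simpl; lia.
  - apply IH; auto. intros; apply Hu; simpl; auto.
Qed.

End MA.
Import MA.

Module MB.
Local Open Scope R_scope.

Lemma tr_list_len K init w th n : length (tr_list K init w th n) = n.
Proof. induction n; simpl; auto. rewrite length_app, IHn; simpl; lia. Qed.

Lemma tr_list_nth K init w th n i : (i < n)%nat -> nth i (tr_list K init w th n) 0%nat = tr K init w th i.
Proof.
  induction n; intros Hi; [lia|].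
  destruct (Nat.eq_dec i n) as [->|Hne].
  - reflexivity.
  - simpl. rewrite app_nth1 by (rewrite tr_list_len; lia). apply IHn; lia.
Qed.

Lemma tr_lt K init w th n : (n < K)%nat -> tr K init w th n = init n.
Proof.
  intros H. unfold tr. simpl. rewrite app_nth2 by (rewrite tr_list_len; lia).
  rewrite tr_list_len, Nat.sub_diag. simpl. replace (n <? K)%nat with true by (symmetry; apply Nat.ltb_lt; auto). auto.
Qed.

Lemma tr_ge K init w th n : (K <= n)%nat ->
  tr K init w th n = ind (sum1 K (fun f => w f * INR (tr K init w th (n - f))) - th).
Proof.
  intros H. unfold tr at 1. simpl. rewrite app_nth2 by (rewrite tr_list_len; lia).
  rewrite tr_list_len, Nat.sub_diag. simpl. replace (n <? K)%nat with false by (symmetry; apply Nat.ltb_ge; auto).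
  f_equal. f_equal. rewrite !sum1_sumL. apply sumL_ext_in. intros f Hf. apply in_seq in Hf.
  rewrite tr_list_nth by lia. reflexivity.
Qed.

End MB.
Import MB.

Module MC.

Definition primeN (p : nat) : Prop := prime (Z.of_nat p).

Lemma primeb_spec p : primeb p = true -> primeN p.
Proof. unfold primeb, primeN. destruct (prime_dec (Z.of_nat p)); auto. discriminate. Qed.

Lemma in_prime_list m x : In x (prime_list m) -> primeN x /\ (2*m+1 <= x)%nat /\ (x < 3*m)%nat.
Proof.
  unfold prime_list. intros H. apply filter_In in H. destruct H as [H1 H2].
  apply in_rev in H1. apply in_seq in H1. split; [apply primeb_spec; auto|lia].
Qed.

Lemma pr_facts m i : (i < rho m)%nat -> primeN (pr m i) /\ (2*m+1 <= pr m i)%nat /\ (pr m i < 3*m)%nat.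
Proof. intros H. apply in_prime_list. unfold pr. apply nth_In. auto. Qed.

Lemma prime_list_nodup m : NoDup (prime_list m).
Proof. unfold prime_list. apply NoDup_filter. apply NoDup_rev. apply seq_NoDup. Qed.

Lemma pr_inj m i j : (i < rho m)%nat -> (j < rho m)%nat -> pr m i = pr m j -> i = j.
Proof. intros Hi Hj He. eapply NoDup_nth; eauto. apply prime_list_nodup. Qed.

Lemma primeN_ge2 p : primeN p -> (2 <= p)%nat.
Proof. unfold primeN; intros H. apply prime_ge_2 in H. lia. Qed.

Lemma primeN_mul p a b : primeN p -> Nat.divide p (a * b) -> Nat.divide p a \/ Nat.divide p b.
Proof.
  intros Hp [c Hc]. assert (Hz : (Z.of_nat p | Z.of_nat a * Z.of_nat b)%Z).
  { exists (Z.of_nat c). rewrite <- Nat2Z.inj_mul, Hc. lia. }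
  pose proof (primeN_ge2 p Hp).
  destruct (prime_mult _ Hp _ _ Hz) as [[e He]|[e He]]; [left|right];
  exists (Z.to_nat e); (assert (0 <= e)%Z by nia); nia.
Qed.

Lemma primeN_div_prime p q : primeN p -> primeN q -> Nat.divide p q -> p = q.
Proof.
  intros Hp Hq [c Hc]. assert (Hz : (Z.of_nat p | Z.of_nat q)%Z).
  { exists (Z.of_nat c). rewrite Hc. lia. }
  pose proof (prime_div_prime _ _ Hp Hq Hz). lia.
Qed.

Lemma divide_small p l : (0 < l)%nat -> (l < p)%nat -> ~ Nat.divide p l.
Proof. intros H1 H2 Hd. apply Nat.divide_pos_le in Hd; lia. Qed.

(* rho bound via parity *)
Lemma cnt_rev (P : nat -> bool) l : cnt P (rev l) = cnt P l.
Proof. induction l; simpl; auto. rewrite cnt_app. rewrite IHl. unfold cnt; simpl. destruct (P a); simpl; lia. Qed.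

Lemma cnt_odd_seq n : forall a, (cnt Nat.odd (seq a n) <= (n + 1) / 2)%nat.
Proof.
  induction n as [n IH] using (well_founded_induction lt_wf). intros a.
  destruct n as [|[|n]]; [unfold cnt; simpl; lia| unfold cnt; simpl; destruct (Nat.odd a); simpl; lia|].
  change (seq a (S (S n))) with (a :: S a :: seq (S (S a)) n).
  specialize (IH n ltac:(lia) (S (S a))).
  unfold cnt in *; cbn [filter length].
  assert (Nat.odd (S a) = negb (Nat.odd a)) by (rewrite Nat.odd_succ, <- Nat.negb_odd; auto).
  rewrite H. replace ((S (S n) + 1) / 2)%nat with (S ((n+1)/2)).
  2:{ replace (S (S n) + 1)%nat with ((n+1) + 1*2)%nat by lia. rewrite Nat.div_add by lia. lia. }
  destruct (Nat.odd a); cbn [negb filter length]; lia.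
Qed.

Lemma rho_bound m : (1 <= m)%nat -> (2 * rho m <= m)%nat.
Proof.
  intros Hm. unfold rho, prime_list.
  change (length (filter primeb (rev (seq (2 * m + 1) (m - 1))))) with (cnt primeb (rev (seq (2 * m + 1) (m - 1)))).
  rewrite cnt_rev.
  assert (cnt primeb (seq (2 * m + 1) (m - 1)) <= cnt Nat.odd (seq (2 * m + 1) (m - 1)))%nat.
  { apply cnt_le. intros x Hx Hp. apply in_seq in Hx. apply primeb_spec in Hp.
    destruct (Nat.odd x) eqn:E; auto. exfalso.
    assert (Nat.even x = true) by (rewrite <- Nat.negb_odd, E; auto).
    apply Nat.even_spec in H. destruct H as [c Hc].
    assert (Hd : (Z.of_nat 2 | Z.of_nat x)%Z) by (exists (Z.of_nat c); lia).
    pose proof (prime_divisors _ Hp _ Hd). lia. }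
  pose proof (cnt_odd_seq (m-1) (2*m+1)).
  assert (2 * ((m - 1 + 1) / 2) <= m - 1 + 1)%nat by (apply Nat.Div0.mul_div_le; lia). lia.
Qed.

End MC.
Import MC.

Module MD.
Local Open Scope R_scope.

Definition wt (m l : nat) : R :=
  if Nat.even (rho m) then
    (if (l <=? 3 * rho m / 2)%nat then 2 else -2)
  else
    (if (l <=? (3 * rho m - 1) / 2)%nat then 2
     else if (l <=? 2 * rho m - 2)%nat then -2
     else -1).

Definition Pj (m j i : nat) : bool :=
  ((j mod pr m i =? 0) && (1 <=? j / pr m i) && (j / pr m i <=? 2 * rho m))%nat.

Lemma abar_eq m j : abar m j = match find (Pj m j) (seq 0 (rho m)) with Some i => wt m (j / pr m i)%nat | None => 0 end.
Proof. unfold abar, ell_of, Pj, wt. destruct (find _ _); reflexivity. Qed.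

Lemma existsb_seq a n x : existsb (Nat.eqb x) (seq a n) = ((a <=? x) && (x <? a + n))%nat.
Proof.
  destruct (existsb (Nat.eqb x) (seq a n)) eqn:E.
  - apply existsb_exists in E. destruct E as [y [Hy Hy']]. apply Nat.eqb_eq in Hy'; subst. apply in_seq in Hy.
    symmetry. apply andb_true_iff. split; [apply Nat.leb_le|apply Nat.ltb_lt]; lia.
  - symmetry. apply not_true_iff_false. intros H. apply andb_true_iff in H. destruct H as [H1 H2].
    apply Nat.leb_le in H1. apply Nat.ltb_lt in H2.
    assert (existsb (Nat.eqb x) (seq a n) = true) by (apply existsb_exists; exists x; split; [apply in_seq; lia| apply Nat.eqb_refl]).
    congruence.
Qed.

Lemma mul_eqb_div j l p : (0 < p)%nat -> (j =? l * p)%nat = ((j mod p =? 0) && (l =? j / p))%nat.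
Proof.
  intros Hp. pose proof (Nat.div_mod_eq j p).
  destruct (Nat.eqb_spec j (l*p)).
  - subst. rewrite Nat.Div0.mod_mul, Nat.div_mul by lia. rewrite !Nat.eqb_refl. auto.
  - symmetry. apply not_true_iff_false. intros Hc. apply andb_true_iff in Hc. destruct Hc as [H1 H2].
    apply Nat.eqb_eq in H1. apply Nat.eqb_eq in H2. subst. apply n. lia.
Qed.

Lemma inner_sum j p n (g : nat -> R) : (0 < p)%nat ->
  sumL (seq 1 n) (fun l => if (j =? l * p)%nat then g l else 0) =
  if ((j mod p =? 0) && (1 <=? j / p) && (j / p <=? n))%nat then g (j / p)%nat else 0.
Proof.
  intros Hp. rewrite (sumL_ext_in _ _ (fun l => if (j mod p =? 0)%nat then (if (l =? j/p)%nat then g l else 0) else 0)).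
  2:{ intros l _. rewrite mul_eqb_div by auto. destruct (j mod p =? 0)%nat; simpl; auto. }
  destruct (j mod p =? 0)%nat; simpl.
  - rewrite sumL_indic by apply seq_NoDup. rewrite existsb_seq.
    replace ((j / p <? 1 + n))%nat with ((j/p <=? n))%nat; auto.
  - apply sumL_zero.
Qed.

Section Weights.
Variable m : nat.
Hypothesis Hm : (1 <= m)%nat.
Hypothesis Hr : (2 <= rho m)%nat.

Lemma pr_pos i : (i < rho m)%nat -> (0 < pr m i)%nat.
Proof. intros H; destruct (pr_facts m i H) as [_ [? _]]; lia. Qed.

Lemma abar_decomp j : abar m j =
  sumL (seq 0 (rho m)) (fun i => sumL (seq 1 (2 * rho m)) (fun l => if (j =? l * pr m i)%nat then wt m l else 0)).
Proof.
  rewrite abar_eq. rewrite (sumL_ext_in _ _ (fun i => if Pj m j i then wt m (j / pr m i)%nat else 0)).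
  2:{ intros i Hi. apply in_seq in Hi. rewrite inner_sum by (apply pr_pos; lia). unfold Pj; auto. }
  rewrite sumL_find; auto. apply seq_NoDup.
  intros a b Ha Hb Pa Pb. apply in_seq in Ha. apply in_seq in Hb. unfold Pj in Pa, Pb.
  apply andb_true_iff in Pa; destruct Pa as [Pa Pa3]; apply andb_true_iff in Pa; destruct Pa as [Pa1 Pa2].
  apply andb_true_iff in Pb; destruct Pb as [Pb Pb3]; apply andb_true_iff in Pb; destruct Pb as [Pb1 Pb2].
  apply Nat.eqb_eq in Pa1, Pb1. apply Nat.leb_le in Pa2, Pa3, Pb2, Pb3.
  destruct (pr_facts m a ltac:(lia)) as [Pra [Pra1 Pra2]].
  destruct (pr_facts m b ltac:(lia)) as [Prb [Prb1 Prb2]].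
  pose proof (rho_bound m Hm).
  assert (Ej : j = ((j / pr m b) * pr m b)%nat). { pose proof (Nat.div_mod_eq j (pr m b)). lia. }
  assert (Hd : Nat.divide (pr m a) ((j / pr m b) * pr m b)%nat).
  { rewrite <- Ej. exists (j / pr m a)%nat. pose proof (Nat.div_mod_eq j (pr m a)). lia. }
  destruct (primeN_mul _ _ _ Pra Hd) as [Hd'|Hd'].
  - exfalso. apply (divide_small (pr m a) (j / pr m b)%nat); auto; lia.
  - apply primeN_div_prime in Hd'; auto. apply pr_inj in Hd'; lia.
Qed.

Lemma sumL_seq_split a x y g : sumL (seq a (x + y)) g = sumL (seq a x) g + sumL (seq (a + x) y) g.
Proof. rewrite seq_app, sumL_app. auto. Qed.

Lemma sumL_seq_const a n g c : (forall x, (a <= x < a + n)%nat -> g x = c) -> sumL (seq a n) g = INR n * c.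
Proof. intros H. rewrite (sumL_ext_in _ _ (fun _ => c)). rewrite sumL_const, length_seq; auto.
  intros x Hx; apply in_seq in Hx; apply H; lia. Qed.

Lemma wt_sum : sumL (seq 1 (2 * rho m)) (wt m) = INR (2 * rho m).
Proof.
  unfold wt. destruct (Nat.even (rho m)) eqn:E.
  - apply Nat.even_spec in E. destruct E as [u Hu]. rewrite Hu.
    replace (3 * (2 * u) / 2)%nat with (3*u)%nat by (replace (3 * (2*u))%nat with (3*u*2)%nat by lia; rewrite Nat.div_mul; lia).
    replace (2 * (2*u))%nat with (3*u + u)%nat by lia. rewrite sumL_seq_split.
    rewrite (sumL_seq_const 1 (3*u) _ 2). rewrite (sumL_seq_const (1 + 3*u) u _ (-2)).
    rewrite !plus_INR, !mult_INR. simpl. lra.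
    + intros x Hx. destruct (Nat.leb_spec x (3*u)); auto; lia.
    + intros x Hx. destruct (Nat.leb_spec x (3*u)); auto; lia.
  - assert (Nat.odd (rho m) = true) by (rewrite <- Nat.negb_even, E; auto).
    apply Nat.odd_spec in H. destruct H as [u Hu]. rewrite Hu.
    assert (1 <= u)%nat by lia.
    replace ((3 * (2 * u + 1) - 1) / 2)%nat with (3*u+1)%nat by
      (replace (3 * (2 * u + 1) - 1)%nat with ((3*u+1)*2)%nat by lia; rewrite Nat.div_mul; lia).
    replace (2 * (2*u+1))%nat with ((3*u+1) + ((u - 1) + 2))%nat by lia.
    rewrite (sumL_seq_split 1 (3*u+1) (u-1+2)), (sumL_seq_split (1 + (3*u+1)) (u-1) 2).
    rewrite (sumL_seq_const 1 (3*u+1) _ 2). rewrite (sumL_seq_const (1 + (3*u+1)) (u-1) _ (-2)).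
    rewrite (sumL_seq_const (1 + (3*u+1) + (u-1)) 2 _ (-1)).
    rewrite !plus_INR, !mult_INR, minus_INR by lia. simpl. lra.
    + intros x Hx. destruct (Nat.leb_spec x (3*u+1)); try lia. destruct (Nat.leb_spec x (3 * u + 1 + (u - 1 + 2) - 2)); auto; lia.
    + intros x Hx. destruct (Nat.leb_spec x (3*u+1)); try lia. destruct (Nat.leb_spec x (3 * u + 1 + (u - 1 + 2) - 2)); auto; lia.
    + intros x Hx. destruct (Nat.leb_spec x (3*u+1)); try lia; auto.
Qed.

Lemma wt_le2 l : wt m l <= 2.
Proof. unfold wt. repeat (destruct (_ <=? _)%nat || destruct (Nat.even _)); lra. Qed.

End Weights.

End MD.
Import MD.

Module ME.
Local Open Scope R_scope.

Lemma mod_sub_mul t a p : (a * p <= t)%nat -> ((t - a * p) mod p = t mod p)%nat.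
Proof. intros H. rewrite <- (Nat.Div0.mod_add (t - a*p) a p). f_equal. lia. Qed.

Lemma mod_eq_divide x y p : (0 < p)%nat -> (x mod p = y mod p)%nat -> (x <= y)%nat -> Nat.divide p (y - x).
Proof.
  intros Hp H Hxy. exists (y / p - x / p)%nat.
  pose proof (Nat.div_mod_eq x p). pose proof (Nat.div_mod_eq y p).
  assert (x / p <= y / p)%nat by (apply Nat.Div0.div_le_mono; auto).
  rewrite Nat.mul_sub_distr_r. lia.
Qed.

Lemma INR_if (b : bool) : INR (if b then 1%nat else 0%nat) = if b then 1 else 0.
Proof. destruct b; simpl; auto. Qed.

Section Key.
Variable m : nat.
Hypothesis Hm : (1 <= m)%nat.
Hypothesis Hr : (2 <= rho m)%nat.

Lemma lp_le_k i l : (i < rho m)%nat -> (l <= 2 * rho m)%nat -> (l * pr m i <= kk m)%nat.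
Proof.
  intros Hi Hl. destruct (pr_facts m i Hi) as [_ [H1 H2]]. unfold kk. nia.
Qed.

Lemma key_sum i t : (i < rho m)%nat -> (kk m <= t)%nat ->
  ind (sum1 (kk m) (fun j => abar m j * INR (if ((t - j) mod pr m i =? kk m mod pr m i)%nat then 1%nat else 0%nat)) - thetabar m)
  = if (t mod pr m i =? kk m mod pr m i)%nat then 1%nat else 0%nat.
Proof.
  intros Hi Ht.
  set (X := fun j => INR (if ((t - j) mod pr m i =? kk m mod pr m i)%nat then 1%nat else 0%nat)).
  assert (Hs : sum1 (kk m) (fun j => abar m j * X j) =
     sumL (seq 0 (rho m)) (fun i' => sumL (seq 1 (2 * rho m)) (fun l => wt m l * X (l * pr m i')%nat))).
  { rewrite sum1_sumL.
    rewrite (sumL_ext_in _ _ (fun j => sumL (seq 0 (rho m)) (fun i' => sumL (seq 1 (2 * rho m))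
         (fun l => if (j =? l * pr m i')%nat then wt m l * X j else 0)))).
    2:{ intros j _. rewrite abar_decomp by auto. rewrite <- sumL_scal. apply sumL_ext_in. intros i' _.
        rewrite <- sumL_scal. apply sumL_ext_in. intros l _. destruct (_ =? _)%nat; lra. }
    rewrite sumL_swap. apply sumL_ext_in. intros i' Hi'. apply in_seq in Hi'.
    rewrite sumL_swap. apply sumL_ext_in. intros l Hl. apply in_seq in Hl.
    rewrite (sumL_indic _ (l * pr m i') (fun j => wt m l * X j)) by apply seq_NoDup.
    rewrite existsb_seq. pose proof (lp_le_k i' l ltac:(lia) ltac:(lia)).
    pose proof (pr_pos m Hm Hr i' ltac:(lia)).
    replace ((1 <=? l * pr m i') && (l * pr m i' <? 1 + kk m))%nat with true; auto.
    symmetry; apply andb_true_iff; split; [apply Nat.leb_le|apply Nat.ltb_lt]; nia. }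
  change (sum1 (kk m) _) with (sum1 (kk m) (fun j => abar m j * X j)). rewrite Hs. clear Hs.
  destruct (pr_facts m i Hi) as [Pp [Pp1 Pp2]]. pose proof (rho_bound m Hm).
  set (p := pr m i) in *.
  destruct ((t mod p =? kk m mod p)%nat) eqn:Ec.
  - rewrite (sumL_ext_in _ _ (fun i' => if (i' =? i)%nat then INR (2 * rho m) else 0)).
    + rewrite sumL_indic by apply seq_NoDup. rewrite existsb_seq.
      replace ((0 <=? i) && (i <? 0 + rho m))%nat with true by (symmetry; apply andb_true_iff; split; [apply Nat.leb_le|apply Nat.ltb_lt]; lia).
      unfold thetabar, ind. replace (INR (2 * rho m) - INR (2 * rho m)) with 0 by lra.
      destruct (Rle_dec 0 0); auto. lra.
    + intros i' Hi'. apply in_seq in Hi'. destruct (Nat.eqb_spec i' i).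
      * subst i'. rewrite <- (wt_sum m Hm Hr). apply sumL_ext_in. intros l Hl. apply in_seq in Hl.
        unfold X. rewrite mod_sub_mul by (pose proof (lp_le_k i l ltac:(lia) ltac:(lia)); unfold p; lia). fold p. rewrite Ec. simpl. lra.
      * rewrite <- (sumL_zero (seq 1 (2 * rho m))). apply sumL_ext_in. intros l Hl. apply in_seq in Hl.
        unfold X. destruct ((t - l * pr m i') mod p =? kk m mod p)%nat eqn:E2; [|simpl; lra].
        exfalso. apply Nat.eqb_eq in E2. apply Nat.eqb_eq in Ec.
        pose proof (lp_le_k i' l ltac:(lia) ltac:(lia)).
        assert (Hd : Nat.divide p (t - (t - l * pr m i'))).
        { apply mod_eq_divide; try lia. }
        replace (t - (t - l * pr m i'))%nat with (l * pr m i')%nat in Hd by lia.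
        destruct (pr_facts m i' ltac:(lia)) as [Pq [Pq1 Pq2]].
        destruct (primeN_mul _ _ _ Pp Hd) as [Hd'|Hd'].
        -- apply (divide_small p l); auto; lia.
        -- apply primeN_div_prime in Hd'; auto. apply pr_inj in Hd'; lia.
  - assert (Hle : sumL (seq 0 (rho m)) (fun i' => sumL (seq 1 (2 * rho m)) (fun l => wt m l * X (l * pr m i')%nat))
                  <= sumL (seq 0 (rho m)) (fun i' => if (i' =? i)%nat then 0 else 2)).
    { apply sumL_le. intros i' Hi'. apply in_seq in Hi'. destruct (Nat.eqb_spec i' i).
      - subst i'. right. rewrite <- (sumL_zero (seq 1 (2 * rho m))). apply sumL_ext_in. intros l Hl. apply in_seq in Hl.
        unfold X. rewrite mod_sub_mul by (pose proof (lp_le_k i l ltac:(lia) ltac:(lia)); unfold p; lia). fold p. rewrite Ec. simpl. lra.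
      - apply Rle_trans with (sumL (seq 1 (2 * rho m)) (fun l => 2 * (if ((t - l * pr m i') mod p =? kk m mod p)%nat then 1 else 0))).
        + apply sumL_le. intros l Hl. unfold X. rewrite INR_if. pose proof (wt_le2 m l).
          destruct ((t - l * pr m i') mod p =? kk m mod p)%nat; lra.
        + rewrite sumL_scal_l, sumL_cnt.
          assert (Hc1 : (cnt (fun l => ((t - l * pr m i') mod p =? kk m mod p)%nat) (seq 1 (2 * rho m)) <= 1)%nat).
          { apply cnt_le1; [apply seq_NoDup|]. intros a b Ha Hb Pa Pb. apply in_seq in Ha. apply in_seq in Hb.
            apply Nat.eqb_eq in Pa, Pb.
            destruct (pr_facts m i' ltac:(lia)) as [Pq [Pq1 Pq2]].
            pose proof (lp_le_k i' a ltac:(lia) ltac:(lia)). pose proof (lp_le_k i' b ltac:(lia) ltac:(lia)).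
            assert (forall a b, (1 <= a < 1 + 2 * rho m)%nat -> (1 <= b < 1 + 2 * rho m)%nat -> (a <= b)%nat ->
                      ((t - a * pr m i') mod p = kk m mod p)%nat -> ((t - b * pr m i') mod p = kk m mod p)%nat -> a = b).
            { clear a b Ha Hb Pa Pb H0 H1. intros a b Ha Hb Hab Pa Pb.
              pose proof (lp_le_k i' a ltac:(lia) ltac:(lia)). pose proof (lp_le_k i' b ltac:(lia) ltac:(lia)).
              assert (Hd : Nat.divide p ((t - a * pr m i') - (t - b * pr m i'))).
              { apply mod_eq_divide; try lia. nia. }
              replace ((t - a * pr m i') - (t - b * pr m i'))%nat with ((b - a) * pr m i')%nat in Hd
                by (rewrite Nat.mul_sub_distr_r; lia).
              destruct (primeN_mul _ _ _ Pp Hd) as [Hd'|Hd'].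
              - destruct (Nat.eq_dec a b); auto. exfalso. apply (divide_small p (b - a)); auto; lia.
              - apply primeN_div_prime in Hd'; auto. apply pr_inj in Hd'; lia. }
            destruct (Nat.le_ge_cases a b); [apply H2|symmetry; apply H2]; auto. }
          apply le_INR in Hc1. change (INR 1) with 1 in Hc1. lra. }
    assert (Hsum : sumL (seq 0 (rho m)) (fun i' => if (i' =? i)%nat then 0 else 2) = INR (rho m) * 2 - 2).
    { assert (sumL (seq 0 (rho m)) (fun i' => if (i' =? i)%nat then 0 else 2) + sumL (seq 0 (rho m)) (fun i' => if (i' =? i)%nat then 2 else 0) = sumL (seq 0 (rho m)) (fun _ => 2)).
      { rewrite <- sumL_plus. apply sumL_ext_in. intros x _; destruct (x =? i)%nat; lra. }
      rewrite sumL_const, length_seq in H0. rewrite (sumL_indic _ i (fun _ => 2)) in H0 by apply seq_NoDup.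
      rewrite existsb_seq in H0.
      replace ((0 <=? i) && (i <? 0 + rho m))%nat with true in H0 by (symmetry; apply andb_true_iff; split; [apply Nat.leb_le|apply Nat.ltb_lt]; lia).
      lra. }
    unfold ind, thetabar. destruct (Rle_dec _ _) as [Hc|]; auto. exfalso.
    rewrite mult_INR in Hc. change (INR 2) with 2 in Hc. clearbody X. lra.
Qed.

End Key.

End ME.
Import ME.

Module MF.
Local Open Scope R_scope.

Lemma reindex (r K K0 : nat) (F : nat -> R) : (0 < r)%nat -> (K <= K0)%nat ->
  sumL (seq 1 (r * K)) (fun f => if ((f mod r =? 0) && (1 <=? f / r) && (f / r <=? K0))%nat then F f else 0)
  = sumL (seq 1 K) (fun j => F (r * j)%nat).
Proof.
  intros Hr. induction K; intros HK.
  - rewrite Nat.mul_0_r. reflexivity.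
  - replace (r * S K)%nat with (r * K + ((r - 1) + 1))%nat by lia.
    rewrite seq_app, seq_app, sumL_app, sumL_app, IHK by lia.
    replace (S K) with (K + 1)%nat by lia. rewrite seq_app, sumL_app. f_equal.
    rewrite (sumL_ext_in _ _ (fun _ => 0)).
    + rewrite sumL_zero. unfold sumL. cbn [map fold_right seq].
      replace (1 + r * K + (r - 1))%nat with (r * S K)%nat by lia.
      replace (1 + K)%nat with (S K) by lia.
      rewrite (Nat.mul_comm r (S K)), Nat.Div0.mod_mul, Nat.div_mul by lia.
      replace ((S K <=? K0))%nat with true by (symmetry; apply Nat.leb_le; lia).
      replace (1 <=? S K)%nat with true by (symmetry; apply Nat.leb_le; lia). simpl.
      lra.
    + intros f Hf. apply in_seq in Hf.
      replace (f mod r)%nat with (f - r * K)%nat.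
      * replace (f - r * K =? 0)%nat with false by (symmetry; apply Nat.eqb_neq; lia). auto.
      * replace f with ((f - r*K) + K * r)%nat at 2 by lia. rewrite Nat.Div0.mod_add. rewrite Nat.mod_small; lia.
Qed.

Section YF.
Variable m : nat.
Hypothesis Hm : (1 <= m)%nat.
Hypothesis Hr : (2 <= rho m)%nat.

Lemma beta_mod i : (i < rho m)%nat -> beta_ m i = (kk m mod pr m i)%nat.
Proof. intros Hi. unfold beta_, mu. pose proof (pr_pos m Hm Hr i Hi). rewrite Nat.Div0.mod_eq; lia. Qed.

Lemma xa_formula i : (i < rho m)%nat -> forall t,
  xa m i t = if (t mod pr m i =? kk m mod pr m i)%nat then 1%nat else 0%nat.
Proof.
  intros Hi t. induction t as [t IH] using (well_founded_induction lt_wf).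
  pose proof (pr_pos m Hm Hr i Hi) as Hp.
  unfold xa. destruct (Nat.lt_ge_cases t (kk m)) as [Ht|Ht].
  - rewrite tr_lt by auto. unfold x_init. rewrite beta_mod by auto.
    pose proof (Nat.div_mod_eq (kk m) (pr m i)). pose proof (Nat.mod_upper_bound (kk m) (pr m i) ltac:(lia)).
    pose proof (Nat.div_mod_eq t (pr m i)). pose proof (Nat.mod_upper_bound t (pr m i) ltac:(lia)).
    unfold mu.
    destruct (existsb _ _) eqn:E.
    + apply existsb_exists in E. destruct E as [l [Hl Hl']]. apply in_seq in Hl. apply Nat.eqb_eq in Hl'.
      replace (t mod pr m i)%nat with (kk m mod pr m i)%nat. rewrite Nat.eqb_refl; auto.
      rewrite Hl', Nat.Div0.mod_add, Nat.Div0.mod_mod; auto.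
    + destruct (Nat.eqb_spec (t mod pr m i) (kk m mod pr m i)) as [Heq|]; auto. exfalso.
      assert (existsb (fun l => (t =? kk m mod pr m i + l * pr m i)%nat) (seq 0 (kk m / pr m i)) = true).
      { apply existsb_exists. exists (t / pr m i)%nat. split.
        - apply in_seq. split; [lia|]. simpl. nia.
        - apply Nat.eqb_eq. lia. }
      congruence.
  - rewrite tr_ge by auto. fold (xa m i t).
    rewrite sum1_sumL.
    rewrite (sumL_ext_in _ _ (fun j => abar m j * INR (if ((t - j) mod pr m i =? kk m mod pr m i)%nat then 1%nat else 0%nat))).
    + rewrite <- sum1_sumL. apply key_sum; auto.
    + intros j Hj. apply in_seq in Hj. fold (xa m i (t - j)). rewrite IH by lia. auto.
Qed.

Definition Yf (n : nat) : nat :=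
  if ((1 + n / rho m) mod pr m (n mod rho m) =? kk m mod pr m (n mod rho m))%nat then 1%nat else 0%nat.

Lemma y_formula n : y m n = Yf n.
Proof.
  induction n as [n IH] using (well_founded_induction lt_wf).
  assert (Hr0 : (0 < rho m)%nat) by lia.
  assert (Hi : (n mod rho m < rho m)%nat) by (apply Nat.mod_upper_bound; lia).
  unfold y. destruct (Nat.lt_ge_cases n (hh m)) as [Hn|Hn].
  - rewrite tr_lt by auto. unfold y_init. rewrite xa_formula by auto. unfold Yf. auto.
  - rewrite tr_ge by auto.
    set (i := (n mod rho m)%nat) in *. set (t := (1 + n / rho m)%nat).
    assert (Hkt : (kk m <= n / rho m)%nat).
    { apply Nat.div_le_lower_bound; try lia. unfold hh in Hn. lia. }
    pose proof (Nat.div_mod_eq n (rho m)) as Hdm. fold i in Hdm.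
    assert (Hn1 : (1 <= n)%nat) by (unfold hh, kk in Hn; nia).
    rewrite sum1_sumL. unfold hh at 1.
    rewrite (sumL_ext_in _ _ (fun f => if ((f mod rho m =? 0) && (1 <=? f / rho m) && (f / rho m <=? kk m))%nat
                                        then abar m (f / rho m)%nat * INR (Yf (n - f)) else 0)).
    2:{ intros f Hf. apply in_seq in Hf. fold (y m (n - f)). rewrite IH by lia. unfold bw.
        destruct (_ && _)%bool; lra. }
    rewrite (reindex (rho m) (kk m) (kk m) (fun f => abar m (f / rho m)%nat * INR (Yf (n - f)))) by lia.
    rewrite (sumL_ext_in _ _ (fun j => abar m j * INR (if ((t - j) mod pr m i =? kk m mod pr m i)%nat then 1%nat else 0%nat))).
    + rewrite <- sum1_sumL. unfold Yf at 1. fold i. fold t. apply key_sum; auto. unfold t; lia.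
    + intros j Hj. apply in_seq in Hj. rewrite Nat.mul_comm, Nat.div_mul by lia. f_equal. f_equal.
      unfold Yf.
      assert (E1 : (n - j * rho m)%nat = (i + (n / rho m - j) * rho m)%nat).
      { rewrite Nat.mul_sub_distr_r. assert (j * rho m <= n / rho m * rho m)%nat by (apply Nat.mul_le_mono_r; lia). lia. }
      rewrite E1. rewrite Nat.Div0.mod_add, Nat.div_add by lia.
      rewrite (Nat.mod_small i) by auto. rewrite (Nat.div_small i) by auto.
      replace (1 + (0 + (n / rho m - j)))%nat with (t - j)%nat by (unfold t; lia). auto.
Qed.

End YF.

End MF.
Import MF.

Module MG.
Local Open Scope nat_scope.

Definition natsum (l : list nat) (g : nat -> nat) : nat := fold_right plus 0%nat (map g l).

Lemma natsum_cons a l g : natsum (a :: l) g = g a + natsum l g.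
Proof. reflexivity. Qed.

Lemma natsum_plus l g1 g2 : natsum l (fun x => g1 x + g2 x) = natsum l g1 + natsum l g2.
Proof. unfold natsum; induction l; simpl; auto. rewrite IHl; lia. Qed.

Lemma natsum_ext_in l g1 g2 : (forall x, In x l -> g1 x = g2 x) -> natsum l g1 = natsum l g2.
Proof. unfold natsum; induction l; simpl; intros H; auto; rewrite H by auto; f_equal; auto. Qed.

Lemma natsum_const l c : natsum l (fun _ => c) = length l * c.
Proof. unfold natsum; induction l; simpl; auto; rewrite IHl; lia. Qed.

Lemma natsum_le l g1 g2 : (forall x, In x l -> g1 x <= g2 x) -> natsum l g1 <= natsum l g2.
Proof. unfold natsum; induction l; simpl; intros H; auto.
  specialize (IHl (fun x Hx => H x (or_intror Hx))). specialize (H a (or_introl eq_refl)). lia. Qed.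

Lemma natsum_indic l (c : nat) (b : bool) : NoDup l -> In c l ->
  natsum l (fun r => if (b && (c =? r)) then 1 else 0) = if b then 1 else 0.
Proof.
  induction l as [|a l IH]; intros Hnd Hin; [destruct Hin|]. inversion Hnd; subst.
  rewrite natsum_cons. destruct Hin as [->|Hin].
  - rewrite Nat.eqb_refl. rewrite (natsum_ext_in l _ (fun _ => 0)). rewrite natsum_const. destruct b; simpl; lia.
    intros x Hx. destruct (Nat.eqb_spec c x); subst; [contradiction|]. destruct b; auto.
  - rewrite IH; auto. destruct (Nat.eqb_spec c a); subst; [contradiction|]. destruct b; auto.
Qed.

Lemma natsum_strict l a b r0 delta : NoDup l -> In r0 l -> (forall r, In r l -> a r <= b r) ->
  a r0 + delta <= b r0 -> natsum l a + delta <= natsum l b.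
Proof.
  induction l as [|x l IH]; intros Hnd Hin Hab Hr0; [destruct Hin|]. inversion Hnd; subst.
  rewrite !natsum_cons. destruct Hin as [->|Hin].
  - assert (natsum l a <= natsum l b).
    { apply (natsum_le l a b). intros; apply Hab; simpl; auto. }
    lia.
  - specialize (IH H2 Hin (fun r Hr => Hab r (or_intror Hr)) Hr0). specialize (Hab x (or_introl eq_refl)). lia.
Qed.

Lemma cnt_classes (P : nat -> bool) (cls : nat -> nat) (R : nat) l :
  (forall x, In x l -> cls x < R) ->
  cnt P l = natsum (seq 0 R) (fun r => cnt (fun x => P x && (cls x =? r)) l).
Proof.
  induction l as [|a l IH]; intros H.
  - unfold cnt; simpl. rewrite natsum_const. lia.
  - transitivity ((if P a then 1 else 0) + cnt P l).
    { unfold cnt; simpl. destruct (P a); simpl; lia. }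
    rewrite IH by (intros; apply H; simpl; auto).
    rewrite <- (natsum_indic (seq 0 R) (cls a) (P a)).
    2: apply seq_NoDup. 2:{ apply in_seq. specialize (H a (or_introl eq_refl)). lia. }
    rewrite <- natsum_plus. apply natsum_ext_in. intros r _. unfold cnt; simpl.
    destruct (P a && (cls a =? r)); simpl; lia.
Qed.

Lemma cnt_existsb (Q : nat -> nat -> bool) (Rp : nat -> bool) Ls l :
  cnt (fun x => existsb (fun j => Q j x) Ls && Rp x) l <= natsum Ls (fun j => cnt (fun x => Q j x && Rp x) l).
Proof.
  induction l as [|a l IH].
  - unfold cnt; simpl. rewrite natsum_const; lia.
  - transitivity ((if existsb (fun j => Q j a) Ls && Rp a then 1 else 0) + cnt (fun x => existsb (fun j => Q j x) Ls && Rp x) l).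
    { unfold cnt; simpl. destruct (_ && _); simpl; lia. }
    assert (Hs : natsum Ls (fun j => cnt (fun x => Q j x && Rp x) (a :: l)) =
      natsum Ls (fun j => if Q j a && Rp a then 1 else 0) + natsum Ls (fun j => cnt (fun x => Q j x && Rp x) l)).
    { rewrite <- natsum_plus. apply natsum_ext_in. intros j _. unfold cnt; simpl. destruct (Q j a && Rp a); simpl; lia. }
    rewrite Hs. apply Nat.add_le_mono; auto.
    destruct (existsb (fun j => Q j a) Ls && Rp a) eqn:E; [|lia].
    apply andb_true_iff in E. destruct E as [E1 E2]. apply existsb_exists in E1. destruct E1 as [j [Hj Qj]].
    clear - Hj Qj E2. induction Ls as [|b Ls IHL]; [destruct Hj|]. unfold natsum; simpl.
    destruct Hj as [->|Hj]. rewrite Qj, E2. simpl. lia. specialize (IHL Hj). unfold natsum in IHL. lia.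
Qed.

Lemma natsum_le1 l g : (forall x, In x l -> g x <= 1) -> natsum l g <= length l.
Proof. intros H. rewrite <- (Nat.mul_1_r (length l)), <- natsum_const. apply natsum_le; auto. Qed.

Lemma cnt_cons (P : nat -> bool) a l : cnt P (a :: l) = (if P a then 1 else 0) + cnt P l.
Proof. unfold cnt; simpl. destruct (P a); reflexivity. Qed.

Lemma cnt_shift (P : nat -> bool) c len : forall a, cnt (fun n => P (n + c)) (seq a len) = cnt P (seq (a + c) len).
Proof. induction len; intros a; [reflexivity|].
  change (seq a (S len)) with (a :: seq (S a) len). change (seq (a+c) (S len)) with ((a+c) :: seq (S (a+c)) len).
  rewrite !cnt_cons, IHlen. reflexivity. Qed.

Lemma cnt_one e l : NoDup l -> In e l -> cnt (fun n => n =? e) l = 1.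
Proof.
  induction l as [|a l IH]; intros Hnd Hin; [destruct Hin|]. inversion Hnd; subst. unfold cnt in *; simpl.
  destruct Hin as [->|Hin].
  - rewrite Nat.eqb_refl. simpl. f_equal. assert (filter (fun n => n =? e) l = []); [|rewrite H; auto].
    destruct (filter (fun n => n =? e) l) eqn:E; auto. exfalso. assert (In n (filter (fun n => n =? e) l)) by (rewrite E; simpl; auto).
    apply filter_In in H. destruct H. apply Nat.eqb_eq in H0; subst; contradiction.
  - destruct (Nat.eqb_spec a e); subst; [contradiction|]. apply IH; auto.
Qed.

Lemma cnt_block P e : 0 < P -> e < P -> forall a, cnt (fun n => n mod P =? e) (seq a P) = 1.
Proof.
  intros HP He a. induction a.
  - rewrite (cnt_ext_in _ (fun n => n =? e)). apply cnt_one; [apply seq_NoDup|apply in_seq; lia].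
    intros x Hx. apply in_seq in Hx. rewrite Nat.mod_small; auto. lia.
  - assert (E1: seq a P = a :: seq (S a) (P-1)) by (replace P with (S (P-1)) at 1 by lia; reflexivity).
    assert (E2: seq (S a) P = seq (S a) (P-1) ++ [S a + (P - 1)]) by (replace P with (S (P-1)) at 1 by lia; apply seq_S).
    rewrite E1, cnt_cons in IHa. rewrite E2, cnt_app, cnt_cons.
    replace (S a + (P - 1)) with (a + 1 * P) by lia. rewrite Nat.Div0.mod_add. unfold cnt at 2; simpl.
    destruct (a mod P =? e); simpl in *; lia.
Qed.

Lemma cnt_mult P e a q : 0 < P -> e < P -> cnt (fun n => n mod P =? e) (seq a (q * P)) = q.
Proof.
  intros HP He. revert a. induction q; intros a; simpl; auto.
  rewrite seq_app, cnt_app, cnt_block, IHq; auto.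
Qed.

Lemma cnt_prefix (P : nat -> bool) a len len' : len <= len' -> cnt P (seq a len) <= cnt P (seq a len').
Proof. intros H. replace len' with (len + (len' - len)) by lia. rewrite seq_app, cnt_app. lia. Qed.

Lemma cnt_rev_window (P : nat -> bool) t len : len <= t -> cnt (fun f => P (t - f)) (seq 1 len) = cnt P (seq (t - len) len).
Proof.
  induction len; intros H; auto.
  rewrite seq_S, cnt_app, IHlen by lia.
  replace (t - S len) with (t - S len) by auto. rewrite <- cons_seq.
  replace (S (t - S len)) with (t - len) by lia. unfold cnt; simpl.
  replace (t - (1 + len)) with (t - S len) by lia. destruct (P (t - S len)); simpl; lia.
Qed.

End MG.
Import MG.

Module MH.
Local Open Scope nat_scope.

Lemma fold_lcm_pos l acc : acc <> 0 -> (forall x, In x l -> x <> 0) -> fold_left Nat.lcm l acc <> 0.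
Proof.
  revert acc; induction l; simpl; intros acc Ha Hl; auto.
  apply IHl; auto. intros Hc. apply Nat.lcm_eq_0 in Hc. destruct Hc; [lia|]. apply (Hl a); auto.
Qed.

Lemma fold_lcm_least l acc s : Nat.divide acc s -> (forall x, In x l -> Nat.divide x s) -> Nat.divide (fold_left Nat.lcm l acc) s.
Proof.
  revert acc; induction l; simpl; intros acc Ha Hl; auto.
  apply IHl; auto. apply Nat.lcm_least; auto.
Qed.

Definition Mlcm m d := fold_left Nat.lcm (map (pr m) (seq 0 (S d))) 1.
Definition T0 m d := hh m + L1 m d - rho m.

Section Comb.
Variable m : nat.
Hypothesis Hm : 1 <= m.
Hypothesis Hr : 2 <= rho m.
Variable d : nat.
Hypothesis Hd : d <= rho m - 1.

Lemma L1_eq : L1 m d = rho m * Mlcm m d.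
Proof. reflexivity. Qed.

Lemma Mlcm_pos : 1 <= Mlcm m d.
Proof.
  assert (Mlcm m d <> 0); [|lia]. apply fold_lcm_pos; auto.
  intros x Hx. apply in_map_iff in Hx. destruct Hx as [i [<- Hi]]. apply in_seq in Hi.
  pose proof (pr_pos m Hm Hr i ltac:(lia)). lia.
Qed.

Definition Pm r := rho m * pr m r.
Definition em r := r + rho m * (kk m mod pr m r).

Lemma Yclass n r : r < rho m ->
  ((Yf m n =? 1) && (n mod rho m =? r)) = ((n + rho m) mod Pm r =? em r).
Proof.
  intros Hrr. unfold Pm, em. pose proof (pr_pos m Hm Hr r Hrr) as Hp.
  rewrite Nat.Div0.mod_mul_r.
  replace (n + rho m) with (n + 1 * rho m) by lia.
  rewrite Nat.Div0.mod_add, Nat.div_add by lia.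
  assert (Hnr : n mod rho m < rho m) by (apply Nat.mod_upper_bound; lia).
  unfold Yf. destruct (Nat.eqb_spec (n mod rho m) r) as [E|E].
  - rewrite E. rewrite andb_true_r. replace (n / rho m + 1) with (1 + n / rho m) by lia.
    destruct (Nat.eqb_spec ((1 + n / rho m) mod pr m r) (kk m mod pr m r)) as [E2|E2].
    + rewrite E2. simpl. symmetry. apply Nat.eqb_refl.
    + simpl. symmetry. apply Nat.eqb_neq. intros Hc. apply E2.
      apply (Nat.mul_cancel_l _ _ (rho m)). lia. change (S (n / rho m)) with (1 + n / rho m) in Hc. lia.
  - rewrite andb_false_r. symmetry. apply Nat.eqb_neq. intros Hc.
    apply E. assert (Hc2 : (n mod rho m + ((n / rho m + 1) mod pr m r) * rho m) mod rho m = (r + (kk m mod pr m r) * rho m) mod rho m).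
    { f_equal. lia. }
    rewrite !Nat.Div0.mod_add in Hc2. rewrite Nat.Div0.mod_mod in Hc2. rewrite (Nat.mod_small r) in Hc2; auto.
Qed.

Lemma y_class n : y m n = 1 -> (n + rho m) mod Pm (n mod rho m) = em (n mod rho m).
Proof.
  intros H. apply Nat.eqb_eq. rewrite <- Yclass by (apply Nat.mod_upper_bound; lia).
  rewrite <- (y_formula m Hm Hr). rewrite H, !Nat.eqb_refl. auto.
Qed.

Lemma em_lt r : r < rho m -> em r < Pm r.
Proof.
  intros Hrr. unfold em, Pm. pose proof (pr_pos m Hm Hr r Hrr).
  pose proof (Nat.mod_upper_bound (kk m) (pr m r) ltac:(lia)). nia.
Qed.

Lemma a_ge r : r < rho m -> 2 * rho m <= (kk m - 1) / pr m r.
Proof.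
  intros Hrr. destruct (pr_facts m r Hrr) as [_ [H1 H2]].
  apply Nat.div_le_lower_bound; [lia|]. unfold kk. nia.
Qed.

Lemma hh_eq : hh m = rho m * kk m.
Proof. reflexivity. Qed.

Lemma Nr_bound r t : r < rho m -> hh m <= t ->
  cnt (fun f => (inA m d f && (y m (t - f) =? 1)) && ((t - f) mod rho m =? r)) (seq 1 (hh m)) <= (kk m - 1) / pr m r + 1.
Proof.
  intros Hrr Ht. pose proof (pr_pos m Hm Hr r Hrr) as Hp.
  eapply Nat.le_trans.
  { apply (cnt_le _ (fun f => (fun n => (n + rho m) mod Pm r =? em r) (t - f))).
    intros f Hf H. apply andb_true_iff in H. destruct H as [H1 H2]. apply andb_true_iff in H1. destruct H1 as [_ H1].
    rewrite <- Yclass by auto. rewrite <- (y_formula m Hm Hr). rewrite H1, H2. auto. }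
  rewrite (cnt_rev_window (fun n => (n + rho m) mod Pm r =? em r) t (hh m)) by auto.
  rewrite (cnt_shift (fun n => n mod Pm r =? em r)).
  eapply Nat.le_trans.
  { apply (cnt_prefix _ _ _ (((kk m - 1) / pr m r + 1) * Pm r)).
    unfold Pm. rewrite hh_eq.
    pose proof (Nat.div_mod_eq (kk m - 1) (pr m r)). pose proof (Nat.mod_upper_bound (kk m - 1) (pr m r) ltac:(lia)).
    assert (kk m <= ((kk m - 1) / pr m r + 1) * pr m r) by nia. nia. }
  rewrite cnt_mult; auto. unfold Pm; nia. apply em_lt; auto.
Qed.

Lemma T0_ge : hh m <= T0 m d.
Proof. unfold T0. rewrite L1_eq. pose proof Mlcm_pos. nia. Qed.

Lemma cr_bound r : r < rho m ->
  (kk m - 1) / pr m r <= cnt (fun g => inB0 m d g && ((T0 m d - g) mod rho m =? r)) (seq 1 (hh m - d)).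
Proof.
  intros Hrr. pose proof (pr_pos m Hm Hr r Hrr) as Hp. pose proof T0_ge.
  rewrite (cnt_ext_in _ (fun g => (fun n => (n + rho m) mod Pm r =? em r) (T0 m d - g))).
  2:{ intros g Hg. apply in_seq in Hg. unfold inB0. fold (T0 m d).
      replace (1 <=? g) with true by (symmetry; apply Nat.leb_le; lia).
      replace (g <=? hh m - d) with true by (symmetry; apply Nat.leb_le; lia). simpl.
      rewrite <- Yclass by auto. rewrite <- (y_formula m Hm Hr). auto. }
  rewrite (cnt_rev_window (fun n => (n + rho m) mod Pm r =? em r) (T0 m d) (hh m - d)) by lia.
  rewrite (cnt_shift (fun n => n mod Pm r =? em r)).
  eapply Nat.le_trans; [|apply (cnt_prefix _ _ (((kk m - 1) / pr m r) * Pm r))].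
  - rewrite cnt_mult; auto. unfold Pm; nia. apply em_lt; auto.
  - unfold Pm. rewrite hh_eq.
    pose proof (Nat.div_mod_eq (kk m - 1) (pr m r)).
    assert (pr m r * ((kk m - 1) / pr m r) <= kk m - 1) by lia.
    assert (1 <= kk m) by (unfold kk; nia). nia.
Qed.

End Comb.

End MH.
Import MH.

Module MI.
Local Open Scope nat_scope.

Section Comb2.
Variable m : nat.
Hypothesis Hm : 1 <= m.
Hypothesis Hr : 2 <= rho m.
Variable d : nat.
Hypothesis Hd : d <= rho m - 1.

Lemma r0_exists t : hh m <= t -> t <= T0 m d - 1 ->
  exists r0, r0 <= d /\ forall l, l <= d -> (T0 m d - t + l) mod rho m = 0 ->
     ~ Nat.divide (pr m r0) ((T0 m d - t + l) / rho m).
Proof.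
  intros H1 H2. pose proof (Mlcm_pos m Hm Hr d Hd) as HM. pose proof (T0_ge m Hm Hr d Hd).
  assert (HT0 : T0 m d = hh m + rho m * Mlcm m d - rho m) by reflexivity.
  assert (rho m <= rho m * Mlcm m d) by nia.
  set (D := T0 m d - t) in *.
  assert (HD1 : 1 <= D) by (assert (1 <= hh m) by (rewrite hh_eq; unfold kk; nia); unfold D; lia).
  assert (HD2 : D + d < rho m * Mlcm m d) by (unfold D; lia).
  destruct (classic (exists l0, l0 <= d /\ (D + l0) mod rho m = 0)) as [[l0 [Hl0 Hl0']]|Hno].
  - set (s := (D + l0) / rho m).
    assert (Hs : D + l0 = rho m * s) by (pose proof (Nat.div_mod_eq (D + l0) (rho m)); unfold s; lia).
    assert (Hs1 : 1 <= s) by nia.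
    assert (Hs2 : s < Mlcm m d) by nia.
    assert (Hnot : ~ (forall i, i <= d -> Nat.divide (pr m i) s)).
    { intros Hall. assert (Hdv : Nat.divide (Mlcm m d) s).
      { apply fold_lcm_least. apply Nat.divide_1_l. intros x Hx. apply in_map_iff in Hx.
        destruct Hx as [i [<- Hi]]. apply in_seq in Hi. apply Hall; lia. }
      apply Nat.divide_pos_le in Hdv; lia. }
    apply not_all_ex_not in Hnot. destruct Hnot as [r0 Hr0]. apply imply_to_and in Hr0. destruct Hr0 as [Hr0 Hr0'].
    exists r0. split; auto. intros l Hl Hlm.
    assert (l = l0).
    { destruct (Nat.le_ge_cases l l0).
      - pose proof (mod_eq_divide (D + l) (D + l0) (rho m) ltac:(lia) ltac:(lia) ltac:(lia)) as [c Hc].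
        destruct c; nia.
      - pose proof (mod_eq_divide (D + l0) (D + l) (rho m) ltac:(lia) ltac:(lia) ltac:(lia)) as [c Hc].
        destruct c; nia. }
    subst l. fold s. auto.
  - exists 0. split; [lia|]. intros l Hl Hlm. exfalso. apply Hno. exists l; auto.
Qed.

Lemma p_prod_gt i j : i < rho m -> j < rho m -> kk m < pr m i * pr m j.
Proof.
  intros Hi Hj. destruct (pr_facts m i Hi) as [_ [Hi1 _]]. destruct (pr_facts m j Hj) as [_ [Hj1 _]].
  pose proof (rho_bound m Hm). unfold kk.
  assert ((2*m+1)*(2*m+1) <= pr m i * pr m j) by nia. nia.
Qed.

Lemma unique_f t r0 l : hh m <= t -> t <= T0 m d - 1 -> r0 < rho m -> l <= d ->
  (forall l, l <= d -> (T0 m d - t + l) mod rho m = 0 -> ~ Nat.divide (pr m r0) ((T0 m d - t + l) / rho m)) ->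
  forall f1 f2, In f1 (seq 1 (hh m)) -> In f2 (seq 1 (hh m)) ->
  ((l <? f1) && inB0 m d (f1 - l)) && ((y m (t - f1) =? 1) && ((t - f1) mod rho m =? r0)) = true ->
  ((l <? f2) && inB0 m d (f2 - l)) && ((y m (t - f2) =? 1) && ((t - f2) mod rho m =? r0)) = true ->
  f1 = f2.
Proof.
  intros Ht1 Ht2 Hr0 Hl Hr0p.
  pose proof (T0_ge m Hm Hr d Hd) as HT.
  assert (Hrho : 0 < rho m) by lia.
  assert (Hext : forall f, In f (seq 1 (hh m)) ->
     ((l <? f) && inB0 m d (f - l)) && ((y m (t - f) =? 1) && ((t - f) mod rho m =? r0)) = true ->
     (t - f + rho m) mod Pm m r0 = em m r0 /\ (t - f) mod rho m = r0 /\
     (t - f + (T0 m d - t + l) + rho m) mod Pm m ((r0 + (T0 m d - t + l)) mod rho m) = em m ((r0 + (T0 m d - t + l)) mod rho m)).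
  { intros f Hf H. apply in_seq in Hf. repeat rewrite andb_true_iff in H. destruct H as [[Hlf HB] [Hy Hc]].
    apply Nat.ltb_lt in Hlf. apply Nat.eqb_eq in Hy, Hc. unfold inB0 in HB. fold (T0 m d) in HB.
    repeat rewrite andb_true_iff in HB. destruct HB as [[HB1 HB2] HB3]. apply Nat.leb_le in HB1, HB2. apply Nat.eqb_eq in HB3.
    split; [|split; auto].
    - pose proof (y_class m Hm Hr d Hd _ Hy). rewrite Hc in H. auto.
    - pose proof (y_class m Hm Hr d Hd _ HB3).
      replace (T0 m d - (f - l)) with (t - f + (T0 m d - t + l)) in H by lia.
      assert (Em : (t - f + (T0 m d - t + l)) mod rho m = (r0 + (T0 m d - t + l)) mod rho m)
        by (rewrite <- Hc, Nat.Div0.add_mod_idemp_l; auto).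
      rewrite Em in H. auto. }
  assert (Hwlog : forall f1 f2, In f1 (seq 1 (hh m)) -> In f2 (seq 1 (hh m)) -> f2 <= f1 ->
    ((l <? f1) && inB0 m d (f1 - l)) && ((y m (t - f1) =? 1) && ((t - f1) mod rho m =? r0)) = true ->
    ((l <? f2) && inB0 m d (f2 - l)) && ((y m (t - f2) =? 1) && ((t - f2) mod rho m =? r0)) = true -> f1 = f2).
  { intros f1 f2 Hf1 Hf2 Hle H1 H2.
    destruct (Hext f1 Hf1 H1) as [A1 [B1 C1]]. destruct (Hext f2 Hf2 H2) as [A2 [B2 C2]].
    apply in_seq in Hf1. apply in_seq in Hf2.
    set (D := T0 m d - t) in *. set (r' := (r0 + (D + l)) mod rho m) in *.
    assert (Hr' : r' < rho m) by (apply Nat.mod_upper_bound; lia).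
    pose proof (pr_pos m Hm Hr r0 Hr0) as Hp0. pose proof (pr_pos m Hm Hr r' Hr') as Hp'.
    destruct (Nat.eq_dec r' r0) as [Er|Er].
    - exfalso. rewrite Er in C1.
      pose proof (mod_eq_divide (t - f1 + rho m) (t - f1 + (D + l) + rho m) (Pm m r0) ltac:(unfold Pm; nia) ltac:(congruence) ltac:(lia)) as Hdv.
      replace (t - f1 + (D + l) + rho m - (t - f1 + rho m)) with (D + l) in Hdv by lia.
      destruct Hdv as [c Hc]. unfold Pm in Hc.
      apply (Hr0p l Hl).
      + rewrite Hc. replace (c * (rho m * pr m r0)) with ((c * pr m r0) * rho m) by ring. apply Nat.Div0.mod_mul.
      + rewrite Hc. replace (c * (rho m * pr m r0)) with ((c * pr m r0) * rho m) by ring. rewrite Nat.div_mul by lia.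
        exists c; auto.
    - pose proof (mod_eq_divide (t - f1 + rho m) (t - f2 + rho m) (Pm m r0) ltac:(unfold Pm; nia) ltac:(congruence) ltac:(lia)) as Hd1.
      pose proof (mod_eq_divide (t - f1 + (D + l) + rho m) (t - f2 + (D + l) + rho m) (Pm m r') ltac:(unfold Pm; nia) ltac:(congruence) ltac:(lia)) as Hd2.
      replace (t - f2 + rho m - (t - f1 + rho m)) with (f1 - f2) in Hd1 by lia.
      replace (t - f2 + (D + l) + rho m - (t - f1 + (D + l) + rho m)) with (f1 - f2) in Hd2 by lia.
      unfold Pm in Hd1, Hd2. destruct Hd1 as [c1 Hc1].
      assert (Hq : Nat.divide (pr m r') (c1 * pr m r0)).
      { destruct Hd2 as [c2 Hc2]. exists c2. apply (Nat.mul_cancel_l _ _ (rho m)); [lia|]. nia. }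
      destruct (pr_facts m r0 Hr0) as [P0 _]. destruct (pr_facts m r' Hr') as [P' _].
      destruct (primeN_mul _ _ _ P' Hq) as [[c3 Hc3]|Hq'].
      + subst c1. destruct c3.
        * lia.
        * exfalso. pose proof (p_prod_gt r0 r' Hr0 Hr'). rewrite hh_eq in Hf1. nia.
      + apply primeN_div_prime in Hq'; auto. apply pr_inj in Hq'; auto. congruence. }
  intros f1 f2 Hf1 Hf2 H1 H2. destruct (Nat.le_ge_cases f2 f1).
  - apply Hwlog; auto.
  - symmetry. apply Hwlog; auto.
Qed.

End Comb2.

End MI.
Import MI.

Module MJ.
Local Open Scope nat_scope.

Section Comb3.
Variable m : nat.
Hypothesis Hm : 1 <= m.
Hypothesis Hr : 2 <= rho m.
Variable d : nat.
Hypothesis Hd : d <= rho m - 1.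

Lemma Nr0_bound t r0 : hh m <= t -> t <= T0 m d - 1 -> r0 < rho m ->
  (forall l, l <= d -> (T0 m d - t + l) mod rho m = 0 -> ~ Nat.divide (pr m r0) ((T0 m d - t + l) / rho m)) ->
  cnt (fun f => (inA m d f && (y m (t - f) =? 1)) && ((t - f) mod rho m =? r0)) (seq 1 (hh m)) <= S d.
Proof.
  intros H1 H2 H3 H4.
  rewrite (cnt_ext_in _ (fun f => existsb (fun l => (l <? f) && inB0 m d (f - l)) (seq 0 (S d)) && ((y m (t - f) =? 1) && ((t - f) mod rho m =? r0)))).
  2:{ intros f _. unfold inA. rewrite andb_assoc. auto. }
  eapply Nat.le_trans. apply (cnt_existsb (fun l f => (l <? f) && inB0 m d (f - l))).
  rewrite <- (length_seq (S d) 0) at 2. apply natsum_le1. intros l Hl. apply in_seq in Hl.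
  apply cnt_le1. apply seq_NoDup. intros f1 f2 Hf1 Hf2 P1 P2.
  eapply (unique_f m Hm Hr d Hd t r0 l); eauto. lia.
Qed.

Lemma count_main t : hh m <= t -> t <= T0 m d - 1 ->
  cnt (fun f => inA m d f && (y m (t - f) =? 1)) (seq 1 (hh m)) + 1 <= Tot m d.
Proof.
  intros H1 H2.
  destruct (r0_exists m Hm Hr d Hd t H1 H2) as [r0 [Hr0d Hr0p]].
  rewrite (cnt_classes _ (fun f => (t - f) mod rho m) (rho m)) by (intros; apply Nat.mod_upper_bound; lia).
  unfold Tot. change (length (filter (inB0 m d) (seq 1 (hh m - d)))) with (cnt (inB0 m d) (seq 1 (hh m - d))).
  rewrite (cnt_classes (inB0 m d) (fun g => (T0 m d - g) mod rho m) (rho m)) by (intros; apply Nat.mod_upper_bound; lia).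
  assert (Hs : natsum (seq 0 (rho m)) (fun r => cnt (fun x => inA m d x && (y m (t - x) =? 1) && ((t - x) mod rho m =? r)) (seq 1 (hh m))) + (rho m + 1)
     <= natsum (seq 0 (rho m)) (fun r => cnt (fun x => inB0 m d x && ((T0 m d - x) mod rho m =? r)) (seq 1 (hh m - d)) + 1)).
  { apply (natsum_strict _ _ _ r0). apply seq_NoDup. apply in_seq; lia.
    - intros r Hrr. apply in_seq in Hrr.
      pose proof (Nr_bound m Hm Hr d Hd r t ltac:(lia) H1). pose proof (cr_bound m Hm Hr d Hd r ltac:(lia)). lia.
    - pose proof (Nr0_bound t r0 H1 H2 ltac:(lia) Hr0p). pose proof (cr_bound m Hm Hr d Hd r0 ltac:(lia)).
      pose proof (a_ge m Hm Hr d Hd r0 ltac:(lia)). lia. }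
  rewrite natsum_plus, natsum_const, length_seq in Hs. lia.
Qed.

End Comb3.

End MJ.
Import MJ.

Module MK.
Local Open Scope R_scope.

Lemma sumL_int l g : (forall x, exists z, g x = IZR z) -> exists z, sumL l g = IZR z.
Proof.
  intros H. induction l as [|a l IH].
  - exists 0%Z. reflexivity.
  - destruct IH as [z1 Hz1]. destruct (H a) as [z2 Hz2]. exists (z2 + z1)%Z.
    unfold sumL in *; simpl. rewrite Hz1, Hz2, plus_IZR. auto.
Qed.

Lemma abar_int m j : exists z, abar m j = IZR z.
Proof.
  unfold abar. destruct (ell_of m j).
  - destruct (Nat.even _); repeat destruct (_ <=? _)%nat; eexists; reflexivity.
  - exists 0%Z; reflexivity.
Qed.

Lemma bw_int m f : exists z, bw m f = IZR z.
Proof. unfold bw. destruct (_ && _)%bool. apply abar_int. exists 0%Z; reflexivity. Qed.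

Lemma y01 m n : (1 <= m)%nat -> (2 <= rho m)%nat -> y m n = 0%nat \/ y m n = 1%nat.
Proof. intros Hm Hr. rewrite (y_formula m Hm Hr). unfold Yf. destruct (_ =? _)%nat; auto. Qed.


End MK.
Import MK.

Require Import Defs.
Open Scope R_scope.

Theorem lemma17 (m : nat) (lam : R) :
  (1 <= m)%nat -> (2 <= rho m)%nat ->
  -1 <= lam -> lam < 0 ->
  forall d t : nat,
    (d <= rho m - 1)%nat ->
    (t <= L1 m d + hh m - 1 - rho m)%nat ->
    z lam m t d = y m t.
Proof.
  intros Hm Hr Hl1 Hl2 d t Hd Ht.
  assert (Hh1 : (1 <= hh m)%nat) by (rewrite hh_eq; unfold kk; nia).
  pose proof (Mlcm_pos m Hm Hr d Hd) as HM.
  assert (HL : (rho m <= L1 m d)%nat) by (rewrite L1_eq; nia).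
  assert (Ht' : (t <= T0 m d - 1)%nat) by (unfold T0; lia).
  clear Ht. revert Ht'.
  induction t as [t IH] using (well_founded_induction lt_wf). intros Ht.
  unfold z. destruct (Nat.lt_ge_cases t (hh m)) as [Hth|Hth].
  - rewrite tr_lt by auto. auto.
  - rewrite tr_ge by auto.
    rewrite sum1_sumL.
    rewrite (sumL_ext_in _ _ (fun f => cw lam m d f * INR (y m (t - f)))).
    2:{ intros f Hf. apply in_seq in Hf. fold (z lam m (t - f) d). rewrite IH by lia. auto. }
    set (S := sum1 (hh m) (fun f => bw m f * INR (y m (t - f)))).
    set (N := cnt (fun f => inA m d f && (y m (t - f) =? 1))%nat (seq 1 (hh m))).
    assert (HS : sumL (seq 1 (hh m)) (fun f => cw lam m d f * INR (y m (t - f))) = S + betad lam m d * INR N).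
    { unfold S, N. rewrite <- sumL_cnt, <- sumL_scal_l, sum1_sumL, <- sumL_plus. apply sumL_ext_in.
      intros f _. unfold cw. destruct (y01 m (t - f) Hm Hr) as [E|E]; rewrite E; simpl INR;
      destruct (inA m d f); simpl; lra. }
    rewrite HS.
    assert (Hy : y m t = ind (S - thetabar m)).
    { unfold y. rewrite tr_ge by auto. auto. }
    rewrite Hy.
    pose proof (count_main m Hm Hr d Hd t Hth Ht) as HC. fold N in HC.
    apply le_INR in HC. rewrite plus_INR in HC. change (INR 1) with 1 in HC.
    pose proof (pos_INR N) as HN0.
    set (T := INR (Tot m d)) in *. set (Nn := INR N) in *.
    assert (HT : 0 < T) by lra.
    set (b := betad lam m d).
    assert (Hb : b * T = lam) by (unfold b, betad; fold T; field; lra).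
    assert (Hbn : b < 0) by nra.
    destruct (sumL_int (seq 1 (hh m)) (fun f => bw m f * INR (y m (t - f)))) as [zS HzS].
    { intros f. destruct (bw_int m f) as [z1 Hz1]. exists (z1 * Z.of_nat (y m (t - f)))%Z.
      rewrite Hz1, mult_IZR, <- INR_IZR_INZ. auto. }
    change (sumL (seq 1 (hh m)) (fun f => bw m f * INR (y m (t - f)))) with S in HzS.
    unfold theta2, xi. fold b. unfold ind.
    destruct (Rle_dec 0 (S - thetabar m)) as [H0|H0].
    + destruct (Rle_dec 0 (S + b * Nn - (thetabar m + (lam - b / 8)))); auto.
      exfalso. apply n. rewrite <- Hb.
      assert (b * (Nn - T + 1/8) >= 0) by nra. nra.
    + destruct (Rle_dec 0 (S + b * Nn - (thetabar m + (lam - b / 8)))) as [H1|]; auto.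
      exfalso.
      assert (Hint : S - thetabar m <= -1).
      { unfold thetabar in *. rewrite HzS, INR_IZR_INZ in *. rewrite <- minus_IZR in *.
        apply Rnot_le_lt in H0. apply lt_IZR in H0. apply IZR_le. lia. }
      assert (b * Nn <= 0) by nra. nra.
Qed.
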